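(* Assume $|V|\ge2$ and let $\overline\kappa_0=\inf_{x\ne y}\overline\kappa(x,y)$. If $\mu>0$ and there exists a nonzero $f\in\mathbb{R}^V$ with $\mathcal{L}^0f=\mu f$, then $\overline\kappa_0\le\mu$.
   Context: Let $H=(V,E,w)$ be a weighted hypergraph: $V$ is a finite set, $E$ a set of nonempty subsets of $V$, $w\colon E\to\mathbb{R}_{>0}$. Write $x\sim y$ if some $e\in E$ contains both; $H$ is assumed connected. The degree is $d_x=\sum_{e\ni x}w_e>0$, $D=\mathrm{diag}(d_x)$. The distance $d(x,y)$ is the minimal $n$ with a chain $x=z_0\sim\cdots\sim z_n=y$. $\delta_x$ is the indicator of $x$. $\mathbb{R}^V$ carries the inner product $\langle f,g\rangle=\sum_x f(x)g(x)/d_x$ with norm $\|\cdot\|$. For $e\in E$ let $B_e=\mathrm{Conv}\{\delta_x-\delta_y : x,y\in e\}$. The multivalued hypergraph Laplacian is $L(f)=\{\sum_{e}w_e\mathtt{b}_e(\mathtt{b}_e^\top f) : \mathtt{b}_e\in\operatorname{argmax}_{\mathtt b\in B_e}\mathtt b^\top f\}$ and the normalized Laplacian is $\mathcal{L}f=L(D^{-1}f)$, a maximal monotone operator on $(\mathbb{R}^V,\langle\cdot,\cdot\rangle)$. For $f\in\mathbb{R}^V$, $\mathcal{L}f$ is a nonempty closed convex set and $\mathcal{L}^0f$ denotes its unique element of minimal norm $\|\cdot\|$. For $\lambda>0$ the resolvent $J_\lambda=(I+\lambda\mathcal L)^{-1}$ is a single-valued map $\mathbb{R}^V\to\mathbb{R}^V$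 (equivalently $J_\lambda f=\operatorname{argmin}_g\{\frac{1}{2\lambda}\|f-g\|^2+Q(D^{-1}g)\}$, $Q(g)=\frac12\sum_e w_e\max_{x,y\in e}(g(x)-g(y))^2$). A function $f$ is weighted $1$-Lipschitz if $|f(x)/d_x-f(y)/d_y|\le d(x,y)$ for all $x,y$; $\mathrm{Lip}^1_w(V)$ denotes the set of such functions. $\mathrm{KD}_\lambda(x,y)=\sup\{\langle J_\lambda f,\delta_x-\delta_y\rangle : f\in\mathrm{Lip}^1_w(V)\}$. For $x\ne y$: $\kappa_\lambda(x,y)=1-\mathrm{KD}_\lambda(x,y)/d(x,y)$ and $\overline\kappa(x,y)=\limsup_{\lambda\downarrow0}\kappa_\lambda(x,y)/\lambda$. *)

(* Defs.v *)
From HB Require Import structures.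
From mathcomp Require Import all_boot all_order all_algebra.
From mathcomp Require Import all_classical all_reals all_analysis.
Set Implicit Arguments. Unset Strict Implicit. Unset Printing Implicit Defensive.
Import Order.TTheory GRing.Theory Num.Theory.
Import numFieldNormedType.Exports.
Local Open Scope classical_set_scope.
Local Open Scope ring_scope.

Section Hypergraph.
Variables (R : realType) (V : finType) (E : {set {set V}}) (w : {set V} -> R).

Definition adjacent (x y : V) : bool := [exists e in E, (x \in e) && (y \in e)].

Definition chain (n : nat) (x y : V) : Prop :=
  exists p : seq V, [/\ path adjacent x p, last x p = y & size p = n].

Definition connected_hg : Prop := forall x y : V, exists n, chain n x y.

Definition degree (x : V) : R := \sum_(e in E | x \in e) w e.

Definition is_hypergraph : Prop :=
  [/\ (forall e, e \in E -> (0 < #|e|)%N), (forall e, e \in E -> 0 < w e),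
      (forall x, 0 < degree x) & connected_hg].

Definition hdist (x y : V) : nat :=
  xget 0%N [set n | chain n x y /\ forall m, chain m x y -> (n <= m)%N].

Definition delta (x : V) : V -> R := fun z => (z == x)%:R.

Definition winner (f g : V -> R) : R := \sum_x f x * g x / degree x.
Definition wnorm (f : V -> R) : R := Num.sqrt (winner f f).

Definition dotp (b f : V -> R) : R := \sum_x b x * f x.

(* B_e = Conv { delta_x - delta_y : x, y in e } *)
Definition Bset (e : {set V}) : set (V -> R) :=
  [set b | exists c : V * V -> R,
     [/\ (forall p, 0 <= c p), (forall p, c p != 0 -> (p.1 \in e) && (p.2 \in e)),
         \sum_p c p = 1 &
         b = (fun z => \sum_p c p * (delta p.1 z - delta p.2 z))]].

Definition Lset (f : V -> R) : set (V -> R) :=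
  [set u | exists b : {set V} -> V -> R,
     (forall e, e \in E ->
        b e \in Bset e /\ (forall b', b' \in Bset e -> dotp b' f <= dotp (b e) f)) /\
     u = (fun z => \sum_(e in E) w e * b e z * dotp (b e) f)].

Definition nLap (f : V -> R) : set (V -> R) := Lset (fun x => f x / degree x).

Definition nLap0 (f : V -> R) : V -> R :=
  xget (fun _ => 0)
    [set u | u \in nLap f /\ forall v, v \in nLap f -> wnorm u <= wnorm v].

(* resolvent J_lambda = (I + lambda cL)^{-1} *)
Definition resolvent (lam : R) (f : V -> R) : V -> R :=
  xget (fun _ => 0)
    [set g | exists u, u \in nLap g /\ f = (fun z => g z + lam * u z)].

Definition wLip1 (f : V -> R) : Prop :=
  forall x y, `|f x / degree x - f y / degree y| <= (hdist x y)%:R.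

Local Open Scope ereal_scope.

Definition KD (lam : R) (x y : V) : \bar R :=
  ereal_sup [set (winner (resolvent lam f) (fun z => delta x z - delta y z))%:E
            | f in wLip1].

Definition kappa (lam : R) (x y : V) : \bar R :=
  1 - KD lam x y * ((hdist x y)%:R^-1)%:E.

Definition kappa_bar (x y : V) : \bar R :=
  limf_esup (fun lam : R => kappa lam x y * (lam^-1)%:E) (at_right (0 : R)).

Definition kappa_bar0 : \bar R := 
  ereal_inf [set k | exists x y : V, x <> y /\ k = kappa_bar x y].

End Hypergraph.

(* Main.v *)
Require Import Defs.
From HB Require Import structures.
From mathcomp Require Import all_boot all_order all_algebra.
From mathcomp Require Import all_classical all_reals all_analysis.
From mathcomp Require Import lra ring.
Import Order.TTheory GRing.Theory Num.Theory.
Local Open Scope classical_set_scope.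
Local Open Scope ring_scope.

Section S.
Variables (R : realType) (V : finType) (E : {set {set V}}) (w : {set V} -> R).

Lemma Bset_neg e (b : V -> R) : b \in Bset e -> (fun z => - b z) \in Bset e.
Proof.
rewrite !inE => -[c [c0 ce c1 ->]].
exists (fun p => c (p.2, p.1)); split.
- by move=> p; apply: c0.
- by move=> p /ce /= /andP[-> ->].
- rewrite -c1 (reindex_inj (h := fun p : V * V => (p.2, p.1))) /=.
  + by apply: eq_bigr => -[].
  + by move=> [a b'] [a' b''] [-> ->].
- apply/funext => z; rewrite -sumrN (reindex_inj (h := fun p : V * V => (p.2, p.1))) /=.
  + by apply: eq_bigr => -[a b'] _ /=; rewrite -mulrN opprB.
  + by move=> [a b'] [a' b''] [-> ->].
Qed.

Lemma sum_delta (a : V) : \sum_i delta R a i = 1.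
Proof.
rewrite (bigD1 a) //= /delta eqxx big1 ?addr0 // => i /negbTE -> //.
Qed.

Lemma dotp_sum0 e (b : V -> R) (k : R) : b \in Bset e -> dotp b (fun _ => k) = 0.
Proof.
rewrite inE => -[c [_ _ _ ->]]; rewrite /dotp -big_distrl /=.
rewrite exchange_big /= big1 ?mul0r // => p _.
by rewrite -mulr_sumr sumrB !sum_delta subrr mulr0.
Qed.


Lemma dotpZr (b F : V -> R) c : dotp b (fun z => c * F z) = c * dotp b F.
Proof. by rewrite /dotp mulr_sumr; apply: eq_bigr => z _; rewrite mulrCA. Qed.

Lemma dotpNN (b F : V -> R) : dotp (fun z => - b z) (fun z => - F z) = dotp b F.
Proof. by rewrite /dotp; apply: eq_bigr => z _; rewrite mulrNN. Qed.

Lemma dotpNl (b F : V -> R) : dotp (fun z => - b z) F = - dotp b F.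
Proof. by rewrite /dotp -sumrN; apply: eq_bigr => z _; rewrite mulNr. Qed.

Lemma dotpNr (b F : V -> R) : dotp b (fun z => - F z) = - dotp b F.
Proof. by rewrite /dotp -sumrN; apply: eq_bigr => z _; rewrite mulrN. Qed.

Lemma dotpBr (b F G : V -> R) : dotp b (fun z => F z - G z) = dotp b F - dotp b G.
Proof. by rewrite /dotp -sumrB; apply: eq_bigr => z _; rewrite mulrBr. Qed.

Lemma dotp_big (b : {set V} -> V -> R) (a : {set V} -> R) (G : V -> R) :
  dotp (fun z => \sum_(e in E) w e * b e z * a e) G =
  \sum_(e in E) w e * a e * dotp (b e) G.
Proof.
rewrite /dotp (eq_bigr (fun z => \sum_(e in E) w e * b e z * a e * G z)).
  rewrite exchange_big /=; apply: eq_bigr => e _.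
  by rewrite mulr_sumr; apply: eq_bigr => z _; rewrite -!mulrA; congr (_ * _); rewrite mulrCA.
by move=> z _; rewrite mulr_suml.
Qed.

Lemma Lset_scale (F u : V -> R) c : 0 < c -> u \in Lset E w F ->
  (fun z => c * u z) \in Lset E w (fun z => c * F z).
Proof.
move=> c0; rewrite !inE => -[b [hb ->]]; exists b; split.
  move=> e eE; have [h1 h2] := hb e eE; split => // b' /h2.
  by rewrite !dotpZr ler_pM2l.
apply/funext => z; rewrite mulr_sumr; apply: eq_bigr => e _.
by rewrite dotpZr mulrCA.
Qed.

Lemma Lset_neg (F u : V -> R) : u \in Lset E w F ->
  (fun z => - u z) \in Lset E w (fun z => - F z).
Proof.
rewrite !inE => -[b [hb ->]]; exists (fun e z => - b e z); split.
  move=> e eE; have [h1 h2] := hb e eE; split; first exact: Bset_neg.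
  by move=> b' /Bset_neg /h2; rewrite dotpNN dotpNr -dotpNl.
apply/funext => z; rewrite -sumrN; apply: eq_bigr => e _.
by rewrite dotpNN mulrN mulNr.
Qed.


Lemma dotpBl (b c F : V -> R) : dotp (fun z => b z - c z) F = dotp b F - dotp c F.
Proof. by rewrite /dotp -sumrB; apply: eq_bigr => z _; rewrite mulrBl. Qed.

Lemma Lset_const (u : V -> R) k : u \in Lset E w (fun _ => k) -> u = (fun _ => 0).
Proof.
rewrite inE => -[b [hb ->]]; apply/funext => z; apply: big1 => e eE.
by rewrite (dotp_sum0 _ _ _ (hb e eE).1) mulr0.
Qed.

Lemma Lset_mono (F1 F2 u1 u2 : V -> R) : (forall e, e \in E -> 0 < w e) ->
  u1 \in Lset E w F1 -> u2 \in Lset E w F2 ->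
  0 <= dotp (fun z => u1 z - u2 z) (fun z => F1 z - F2 z).
Proof.
move=> wp; rewrite !inE => -[b1 [hb1 ->]] [b2 [hb2 ->]].
rewrite dotpBl !dotp_big -sumrB; apply: sumr_ge0 => e eE.
have [B1 m1] := hb1 e eE; have [B2 m2] := hb2 e eE.
have i1 := m1 _ B2; have i2 := m1 _ (Bset_neg _ _ B2).
have i3 := m2 _ B1; have i4 := m2 _ (Bset_neg _ _ B1).
rewrite !dotpNl in i2 i4.
rewrite !dotpBr.
have we := wp e eE.
set a1 := dotp (b1 e) F1 in i1 i2 *; set a2 := dotp (b2 e) F2 in i3 i4 *.
set p := dotp (b1 e) F2 in i3 i4 *; set q := dotp (b2 e) F1 in i1 i2 *.
rewrite -mulrA -[w e * a2 * _]mulrA -mulrBr; apply: mulr_ge0; first exact: ltW.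
have ha1 : 0 <= a1 by lra.
have ha2 : 0 <= a2 by lra.
have h1 : 0 <= a1 * (a2 - p) by apply: mulr_ge0; lra.
have h2 : 0 <= a2 * (a1 - q) by apply: mulr_ge0; lra.
have h3 : 0 <= (a1 - a2) ^+ 2 by apply: sqr_ge0.
nra.
Qed.


Lemma resolvent_eq (lam : R) (h g u : V -> R) :
  (forall e, e \in E -> 0 < w e) -> (forall x, 0 < degree E w x) ->
  0 < lam -> u \in nLap E w g -> h = (fun z => g z + lam * u z) ->
  resolvent E w lam h = g.
Proof.
move=> wp dp lp ug hE; apply: xget_unique; first by exists u.
move=> g' [u' [ug' hE']].
have := Lset_mono _ _ _ _ wp ug' ug; rewrite /dotp => m.
have key z : (u' z - u z) * (g' z / degree E w z - g z / degree E w z)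
   = - ((g' z - g z) ^+ 2 / (lam * degree E w z)).
  have : g' z + lam * u' z = g z + lam * u z by move: (congr1 (fun f => f z) hE) (congr1 (fun f => f z) hE') => /= <- <-.
  move=> ez; have dz := dp z.
  have -> : u' z - u z = - (g' z - g z) / lam.
    apply: (mulfI (lt0r_neq0 lp)); rewrite mulrCA divff ?lt0r_neq0 // mulr1; lra.
  by field; rewrite ?lt0r_neq0 //.
rewrite (eq_bigr _ (fun z _ => key z)) in m.
rewrite sumrN oppr_ge0 in m.
have m0 : \sum_z (g' z - g z) ^+ 2 / (lam * degree E w z) = 0.
  apply/eqP; rewrite eq_le m /=; apply: sumr_ge0 => z _.
  by apply: divr_ge0; [exact: sqr_ge0 | apply: ltW; apply: mulr_gt0].
have hn : forall z, true -> 0 <= (g' z - g z) ^+ 2 / (lam * degree E w z).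
  by move=> z _; apply: divr_ge0; [exact: sqr_ge0 | apply: ltW; apply: mulr_gt0].
apply/funext => z; have := @psumr_eq0P _ _ _ _ hn m0 z isT.
have dz := dp z.
move=> /eqP; rewrite mulf_eq0 invr_eq0 mulf_eq0 mulf_eq0 (gt_eqF lp) (gt_eqF dz) !orbF orbb subr_eq0 => /eqP //.
Qed.


Lemma hdist_pos x y : connected_hg E -> x != y -> (0 < hdist E x y)%N.
Proof.
move=> con xy; have [n cn] := con x y.
have exP : exists n, `[< chain E n x y >] by exists n; apply/asboolP.
case: (ex_minnP exP) => m /asboolP cm mmin.
rewrite /hdist; case: xgetP; last first.
  move=> /(_ m); case; split => // k ck; apply: mmin; exact/asboolP.
move=> n' _ [[p [_ lp sp]] _].
rewrite lt0n; apply/eqP => n0; move: sp; rewrite n0 => /size0nil pE.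
by move: lp xy; rewrite pE /= => ->; rewrite eqxx.
Qed.

Lemma nLap_scale (g u : V -> R) c : c != 0 -> u \in nLap E w g ->
  (fun z => c * u z) \in nLap E w (fun z => c * g z).
Proof.
move=> c0 ug; rewrite /nLap.
have eF : (fun x => c * g x / degree E w x) = (fun x => c * (g x / degree E w x)).
  by apply/funext => x; rewrite mulrA.
rewrite eF; case: (ltrgtP c 0) => hc; last by move: c0; rewrite hc eqxx.
- have hc' : 0 < - c by rewrite oppr_gt0.
  have := Lset_neg _ _ (Lset_scale _ _ _ hc' ug).
  have e1 : (fun z => - (- c * u z)) = (fun z => c * u z) by apply/funext => z; rewrite mulNr opprK.
  have e2 : (fun z => - (- c * (g z / degree E w z))) = (fun z => c * (g z / degree E w z)) by apply/funext => z; rewrite mulNr opprK.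
  by rewrite e1 e2.
- exact: Lset_scale.
Qed.

Lemma sum_mul_delta (F : V -> R) a : \sum_z F z * delta R a z = F a.
Proof.
rewrite (bigD1 a) //= /delta eqxx mulr1 big1 ?addr0 // => i /negbTE ->.
by rewrite mulr0.
Qed.

Lemma winner_delta (g : V -> R) x y :
  winner E w g (fun z => delta R x z - delta R y z) = g x / degree E w x - g y / degree E w y.
Proof.
rewrite /winner (eq_bigr (fun z => g z / degree E w z * delta R x z - g z / degree E w z * delta R y z)).
  by rewrite sumrB !sum_mul_delta.
by move=> z _; rewrite mulrAC mulrBr.
Qed.


Lemma kappa_bound (a b : V) (h : V -> R) (mu : R) :
  (forall e, e \in E -> 0 < w e) -> (forall x, 0 < degree E w x) ->
  0 < mu -> (0 < hdist E a b)%N -> wLip1 E w h ->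
  (fun z => mu * h z) \in nLap E w h ->
  h a / degree E w a - h b / degree E w b = (hdist E a b)%:R ->
  forall lam : R, 0 < lam -> (kappa E w lam a b * (lam^-1)%:E <= mu%:E)%E.
Proof.
move=> wp dp mu0 hab lip mh hD lam lam0.
set D : R := (hdist E a b)%:R.
have D0 : 0 < D by rewrite ltr0n.
set k : R := (1 + lam * mu)^-1.
have lm0 : 0 < lam * mu by apply: mulr_gt0.
have k0 : 0 < k by rewrite invr_gt0; lra.
have kk : k * (1 + lam * mu) = 1 by rewrite mulVf //; apply: lt0r_neq0; lra.
have res : resolvent E w lam h = (fun z => k * h z).
  apply: (resolvent_eq _ _ _ (fun z => k * (mu * h z)) wp dp lam0).
    exact: nLap_scale (lt0r_neq0 k0) mh.
  apply/funext => z.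
  by transitivity (k * (1 + lam * mu) * h z); [rewrite kk mul1r | ring].
have hK : ((k * D)%:E <= KD E w lam a b)%E.
  apply: ereal_sup_ubound; exists h => //; congr (_%:E).
  by rewrite res winner_delta /D -hD -!mulrA -mulrBr.
rewrite /kappa; move: hK; case: (KD E w lam a b) => [r| |] hK.
- rewrite lee_fin in hK.
  rewrite -EFinM lee_fin -/D.
  have q1 : k <= r / D by rewrite ler_pdivlMr //.
  rewrite ler_pdivrMr //.
  have : 1 - r / D <= 1 - k by lra.
  have : k <= 1 by rewrite invr_le1 ?unitfE; lra.
  nra.
- rewrite gt0_mulye ?lte_fin ?invr_gt0 //.
  by rewrite addeNy gt0_mulNye ?leNye ?lte_fin ?invr_gt0.
- by rewrite leeNy_eq in hK.
Qed.


Lemma main_sec (mu : R) (f : V -> R) :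
  is_hypergraph E w -> 0 < mu -> (exists x, f x != 0) ->
  nLap0 E w f = (fun z => mu * f z) -> (kappa_bar0 E w <= mu%:E)%E.
Proof.
case=> _ wp dp con mu0 [x1 fx1] h0.
have mf : (fun z => mu * f z) \in nLap E w f.
  move: h0; rewrite /nLap0; case: xgetP => [u _ [uin _] <- // | _ h0].
  have := congr1 (fun g => g x1) h0 => /= /eqP.
  by rewrite eq_sym mulf_eq0 (gt_eqF mu0) (negbTE fx1).
pose F := fun x => f x / degree E w x.
have [x0 [y0 Fxy]] : exists x y, F x != F y.
  case: (pselect (exists x y, F x != F y)) => // nc.
  have cF : F = (fun _ => F x1).
    apply/funext => y; apply/eqP; apply: contrapT => ne; apply: nc.
    by exists y, x1; apply/negP.
  move: mf; rewrite /nLap -/F cF => /Lset_const /(congr1 (fun g => g x1)) /= /eqP.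
  by rewrite mulf_eq0 (gt_eqF mu0) (negbTE fx1).
pose r := fun p : V * V => `|F p.1 - F p.2| / (hdist E p.1 p.2)%:R.
pose P := fun p : V * V => p.1 != p.2.
have xy0 : x0 != y0 by apply: contraNneq Fxy => ->.
have P0 : P (x0, y0) by [].
case: (arg_maxP r P0) => -[a b] /= ab rmax.
rewrite /P /= in ab.
have hab := hdist_pos _ _ con ab.
set D : R := (hdist E a b)%:R.
have D0 : 0 < D by rewrite ltr0n.
have r0 : 0 < r (x0, y0).
  rewrite /r /= divr_gt0 ?normr_gt0 ?subr_eq0 // ltr0n; exact: hdist_pos.
have M0 : 0 < r (a, b) by apply: lt_le_trans r0 (rmax _ P0).
have Fab : F a - F b != 0.
  by move: M0; rewrite /r /= pmulr_lgt0 ?invr_gt0 // normr_gt0.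
pose c := D / (F a - F b).
have c0 : c != 0 by rewrite mulf_eq0 invr_eq0 negb_or (gt_eqF D0).
pose h := fun z => c * f z.
have hF z : h z / degree E w z = c * F z by rewrite /h /F mulrA.
have hD : h a / degree E w a - h b / degree E w b = (hdist E a b)%:R.
  by rewrite !hF -mulrBr /c mulfVK.
have lip : wLip1 E w h.
  move=> x y; rewrite !hF -mulrBr normrM.
  case: (eqVneq x y) => [-> | xy]; first by rewrite subrr normr0 mulr0.
  have hxy := hdist_pos _ _ con xy.
  have := rmax (x, y) xy; rewrite /r /= ler_pdivrMr ?ltr0n // => le1.
  have ca : `|c| * `|F a - F b| = D.
    by rewrite -normrM /c mulfVK // ger0_norm // ltW.
  have : `|c| * `|F x - F y| <= `|c| * (`|F a - F b| / D * (hdist E x y)%:R).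
    by rewrite ler_wpM2l.
  by rewrite mulrA (mulrA `|c|) ca divff ?(gt_eqF D0) // mul1r.
have mh : (fun z => mu * h z) \in nLap E w h.
  have := nLap_scale _ _ _ c0 mf.
  have -> : (fun z => c * (mu * f z)) = (fun z => mu * h z).
    by apply/funext => z; rewrite /h mulrCA.
  by [].
apply: (@le_trans _ _ (kappa_bar E w a b)).
  by apply: ereal_inf_lbound; exists a, b; split => //; apply/eqP.
rewrite /kappa_bar limf_esupE.
apply: (@le_trans _ _ (ereal_sup ((fun lam : R => (kappa E w lam a b * (lam^-1)%:E)%E) @` [set x | 0 < x]))).
  apply: ereal_inf_lbound; exists [set x | 0 < x] => //.
  exact: withinT.
apply: ge_ereal_sup => _ [lam lam0 <-].
exact: (kappa_bound _ _ _ _ wp dp mu0 hab lip mh hD lam lam0).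
Qed.

End S.

Theorem mainTheorem14 (R : realType) (V : finType) (E : {set {set V}})
  (w : {set V} -> R) (mu : R) (f : V -> R) :
  is_hypergraph E w ->
  (1 < #|V|)%N ->
  0 < mu ->
  (exists x, f x != 0) ->
  nLap0 E w f = (fun z => mu * f z) ->
  (kappa_bar0 E w <= mu%:E)%E.
Proof. by move=> H _; exact: main_sec. Qed.
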